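(* Let $\alpha=(\alpha_0,\dots,\alpha_5)\in\mathbb{R}^6$ lie in the polytope $\hat P_{II}$ given by \[ -\tfrac12\le\alpha_0<0,\quad \alpha_0<\alpha_r\le1+\alpha_0\ (1\le r\le5),\quad 0\le\alpha_r+\alpha_s\le1\ (1\le r<s\le5), \] \[ 2\alpha_0=\sum_{r>0:\alpha_r+\alpha_0<0}(\alpha_r+\alpha_0),\qquad\sum_{r=0}^5\alpha_r=1. \] For $\zeta=(\zeta_1,\dots,\zeta_n)\in\mathbb{R}^n$ define \[ c(\zeta)=\frac12\sum_{i=1}^n\Big[2\zeta_i^2-2\alpha_0^2+\sum_{r\ge1:\alpha_r<-\alpha_0}(\alpha_r+\alpha_0)^2-\sum_{r\ge1:\alpha_r<-|\zeta_i|}(2\alpha_r^2+2\zeta_i^2)-\sum_{r\ge1:-|\zeta_i|\le\alpha_r<|\zeta_i|}(\alpha_r-|\zeta_i|)^2\Big], \] sums over $1\le r\le5$. Then for $\alpha_0\le\zeta_i\le-\alpha_0$ ($1\le i\le n$) we have $c(\zeta)\le0$, and equality holds only if either $\alpha_r+\alpha_s=0$ for some $1\le r<s\le 5$, or $\zeta_i=\pm\alpha_0$ for all $i$. *)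

(* Defs.v *)
From mathcomp Require Import all_boot all_order all_algebra.
From mathcomp Require Import reals.
Set Implicit Arguments. Unset Strict Implicit. Unset Printing Implicit Defensive.
Import Order.TTheory GRing.Theory Num.Theory.
Local Open Scope ring_scope.

(* alpha : 'I_6 -> R, with alpha ord0 = alpha_0, indices r = 1..5 are the
   ordinals r with 0 < r. *)

Definition in_PII (R : realType) (a : 'I_6 -> R) : Prop :=
  -(1/2) <= a ord0 /\ a ord0 < 0 /\
      (forall r : 'I_6, (0 < r)%N -> a ord0 < a r /\ a r <= 1 + a ord0) /\
      (forall r s : 'I_6, (0 < r)%N -> (r < s)%N -> 0 <= a r + a s /\ a r + a s <= 1) /\
      2 * a ord0 = \sum_(r < 6 | (0 < r)%N && (a r + a ord0 < 0)) (a r + a ord0) /\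
  \sum_(r < 6) a r = 1.

Definition cfun (R : realType) (a : 'I_6 -> R) (n : nat) (z : 'I_n -> R) : R :=
  (1/2) * \sum_(i < n)
    ( 2 * z i ^+ 2 - 2 * a ord0 ^+ 2
      + \sum_(r < 6 | (0 < r)%N && (a r < - a ord0)) (a r + a ord0) ^+ 2
      - \sum_(r < 6 | (0 < r)%N && (a r < - `|z i|)) (2 * a r ^+ 2 + 2 * z i ^+ 2)
      - \sum_(r < 6 | (0 < r)%N && (- `|z i| <= a r) && (a r < `|z i|))
          (a r - `|z i|) ^+ 2 ).

(* Main.v *)
From mathcomp Require Import all_boot all_order all_algebra.
Require Import Defs.
From mathcomp Require Import reals.
From mathcomp Require Import ring lra.
Set Implicit Arguments. Unset Strict Implicit. Unset Printing Implicit Defensive.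
Import Order.TTheory GRing.Theory Num.Theory.
Local Open Scope ring_scope.

Definition kf (R : realType) (d D x : R) : R :=
  x ^+ 2 - (if d < x then (x - d) ^+ 2 else 0) - (if D < x then (x - D) ^+ 2 else 0).

Ltac ifs := repeat (case: ifPn => /=; try (move=> /negbTE ? ); try move=> ?).

Lemma k_small (R : realType) (d D x : R) : x < d -> d <= D -> kf d D x = x ^+ 2.
Proof.
move=> h1 h2; rewrite /kf ltNge (ltW h1) /= ltNge (ltW (lt_le_trans h1 h2)) /=.
by rewrite !subr0.
Qed.

Lemma k_F1 (R : realType) (d D x : R) : 0 <= d -> d <= D -> 0 <= x ->
  kf d D x <= 2 * d * x - d * (if x < d then x else d).
Proof.
move=> h0 h1 h2; case: (ltrP x d) => hx.
  by rewrite k_small //; nra.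
rewrite /kf; case: ifPn => h3; case: ifPn => h4; rewrite ?subr0.
- nra.
- nra.
- rewrite -leNgt in h3; nra.
- rewrite -leNgt in h3; nra.
Qed.

Lemma k_mid (R : realType) (d D x : R) : d <= x -> x <= D -> kf d D x <= 2 * d * x - d ^+ 2.
Proof.
move=> h1 h2; rewrite /kf; rewrite (ltNge D x) h2 /= subr0.
case: ifPn => h3; rewrite ?subr0; first nra.
rewrite -leNgt in h3; have -> : x = d by apply/eqP; rewrite eq_le h3 h1.
nra.
Qed.

Lemma k_big (R : realType) (d D x : R) : d <= D -> D < x ->
  kf d D x = x ^+ 2 - (x - d) ^+ 2 - (x - D) ^+ 2.
Proof. by move=> h1 h2; rewrite /kf h2 (le_lt_trans h1 h2). Qed.

Lemma sumsq (R : realType) (I : finType) (P : pred I) (x : I -> R) :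
  (forall i, P i -> 0 <= x i) ->
  \sum_(i | P i) x i ^+ 2 <= (\sum_(i | P i) x i) ^+ 2.
Proof.
move=> h; rewrite [X in _ <= X]expr2 mulr_suml; apply: ler_sum => i Pi.
rewrite expr2; apply: ler_wpM2l; first exact: h.
rewrite (bigD1 i) //= lerDl; apply: sumr_ge0 => j /andP[Pj _]; exact: h.
Qed.

Lemma sum_ge_elt (R : realType) (I : finType) (P : pred I) (x : I -> R) i :
  (forall i, P i -> 0 <= x i) -> P i -> x i <= \sum_(i | P i) x i.
Proof.
move=> h Pi; rewrite (bigD1 i) //= lerDl; apply: sumr_ge0 => j /andP[Pj _]; exact: h.
Qed.

Lemma zero_of_sum (R : realType) (I : finType) (P : pred I) (x : I -> R) (d : R) :
  (forall i, P i -> 0 <= x i /\ x i < d) ->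
  \sum_(i | P i) (d * x i - x i ^+ 2) <= 0 -> forall i, P i -> x i = 0.
Proof.
move=> h hs.
have h0 : forall i, P i -> 0 <= d * x i - x i ^+ 2.
  by move=> i Pi; have [? ?] := h i Pi; nra.
have hz : \sum_(i | P i) (d * x i - x i ^+ 2) = 0.
  by apply/eqP; rewrite eq_le hs sumr_ge0.
move=> i Pi; have := psumr_eq0P h0 hz Pi; have [? ?] := h i Pi; nra.
Qed.

Lemma key (R : realType) (I : finType) (P : pred I) (x : I -> R) (d D : R) :
  0 <= d -> d <= D -> (forall i, P i -> 0 <= x i /\ x i < d + D) ->
  \sum_(i | P i) x i = d + D ->
  \sum_(i | P i) kf d D (x i) <= 2 * d * D /\
  (0 < d -> \sum_(i | P i) kf d D (x i) = 2 * d * D ->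
     exists i j, [/\ P i, P j, i != j & x i + x j = d + D]).
Proof.
move=> d0 dD hx hS.
have hx0 : forall i, P i -> 0 <= x i by move=> i /hx [].
case: (pickP (fun i => P i && (d <= x i))) => [i /andP[Pi hi] | nA]; last first.
  have lt : forall i, P i -> x i < d.
    by move=> i Pi; move: (nA i); rewrite Pi /= => /negbT; rewrite -ltNge.
  have hk : \sum_(i | P i) kf d D (x i) = \sum_(i | P i) x i ^+ 2.
    by apply: eq_bigr => i Pi; rewrite k_small // lt.
  have hQ : \sum_(i | P i) x i ^+ 2 <= \sum_(i | P i) d * x i.
    by apply: ler_sum => i Pi; have := lt i Pi; have := hx0 i Pi; nra.
  rewrite -mulr_sumr hS in hQ.
  rewrite hk; split; first by nra.
  move=> dpos heq.
  have hz := @zero_of_sum R I P x d (fun i Pi => conj (hx0 i Pi) (lt i Pi)).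
  have : \sum_(i | P i) (d * x i - x i ^+ 2) <= 0.
    by rewrite sumrB -mulr_sumr hS heq; nra.
  move/hz => hz'.
  have : \sum_(i | P i) x i = 0 by apply: big1 => i Pi; exact: hz'.
  rewrite hS => ?; exfalso; lra.
pose m y := if y < d then y else d.
have hm0 : forall i, P i -> 0 <= m (x i).
  by move=> j Pj; rewrite /m; case: ifP => _ //; exact: hx0.
have hki : forall j, P j -> kf d D (x j) <= 2 * d * x j - d * m (x j).
  by move=> j Pj; apply: k_F1 => //; exact: hx0.
case: (pickP (fun j => P j && (d <= x j) && (j != i))) =>
   [j /andP[/andP[Pj hj] ji] | nB].
  have hsum : \sum_(l | P l) kf d D (x l) <= 2 * d * (d + D) - d * \sum_(l | P l) m (x l).
    rewrite -hS mulr_sumr mulr_sumr -sumrB; apply: ler_sum => l Pl.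
    have := hki l Pl; lra.
  have eM : \sum_(l | P l) m (x l) =
      m (x i) + (m (x j) + \sum_(l | P l && (l != i) && (l != j)) m (x l)).
    by rewrite (bigD1 i) //= (bigD1 j) /= ?Pj ?ji.
  have eX : \sum_(l | P l) x l =
      x i + (x j + \sum_(l | P l && (l != i) && (l != j)) x l).
    by rewrite (bigD1 i) //= (bigD1 j) /= ?Pj ?ji.
  have mi : m (x i) = d by rewrite /m ltNge hi.
  have mj : m (x j) = d by rewrite /m ltNge hj.
  have r0 : 0 <= \sum_(l | P l && (l != i) && (l != j)) m (x l).
    by apply: sumr_ge0 => l /andP[/andP[Pl _] _]; exact: hm0.
  rewrite eM mi mj in hsum.
  split; first by nra.
  move=> dpos heq.
  have rz : \sum_(l | P l && (l != i) && (l != j)) m (x l) = 0.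
    by apply/eqP; rewrite eq_le r0 andbT; nra.
  have rz' := psumr_eq0P (fun l (h : P l && (l != i) && (l != j)) =>
        hm0 l (andP (andP h).1).1) rz.
  have rx : \sum_(l | P l && (l != i) && (l != j)) x l = 0.
    apply: big1 => l hl; have := rz' l hl; rewrite /m.
    case: ifP => // _ ?; exfalso; lra.
  exists i, j; split => //; first by rewrite eq_sym.
  by rewrite -hS eX rx addr0.
have lt : forall j, P j -> j != i -> x j < d.
  by move=> j Pj ji; move: (nB j); rewrite Pj ji /= andbT => /negbT; rewrite -ltNge.
pose Po := fun l => P l && (l != i).
have eK : \sum_(l | P l) kf d D (x l) = kf d D (x i) + \sum_(l | Po l) x l ^+ 2.
  rewrite (bigD1 i) //=; congr (_ + _); apply: eq_bigr => l /andP[Pl li].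
  by rewrite k_small // lt.
have eX : \sum_(l | P l) x l = x i + \sum_(l | Po l) x l by rewrite (bigD1 i).
set s := \sum_(l | Po l) x l in eX.
set Q := \sum_(l | Po l) x l ^+ 2 in eK.
have hQ1 : Q <= d * s.
  rewrite /Q /s mulr_sumr; apply: ler_sum => l /andP[Pl li].
  by have := lt l Pl li; have := hx0 l Pl; nra.
have hQ2 : Q <= s ^+ 2 by apply: sumsq => l /andP[Pl _]; exact: hx0.
have s0 : 0 <= s by apply: sumr_ge0 => l /andP[Pl _]; exact: hx0.
have [_ xiD] := hx i Pi.
rewrite eK; case: (lerP (x i) D) => hiD.
  have := k_mid hi hiD => hk.
  split; first by nra.
  move=> dpos heq.
  have hz := @zero_of_sum R I Po x d (fun l (h : Po l) =>
     conj (hx0 l (andP h).1) (lt l (andP h).1 (andP h).2)).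
  have : \sum_(l | Po l) (d * x l - x l ^+ 2) <= 0.
    rewrite sumrB -mulr_sumr -/s -/Q; nra.
  move/hz => hz'.
  have : s = 0 by apply: big1 => l Pl; exact: hz'.
  move=> ?; exfalso; nra.
have hk := k_big dD hiD.
have exi : x i = d + D - s by lra.
have eid : (d + D - s) ^+ 2 - (d + D - s - d) ^+ 2 - (d + D - s - D) ^+ 2 + s ^+ 2 = 2 * d * D by ring.
split; first by rewrite hk exi; lra.
move=> dpos heq.
have spos : 0 < s by lra.
case: (pickP (fun l => Po l && (0 < x l))) => [j /andP[/andP[Pj ji] xj] | nC]; last first.
  have : s = 0.
    apply: big1 => l Pl; move: (nC l); rewrite Pl /= => /negbT; rewrite -leNgt => h.
    by apply/eqP; rewrite eq_le h hx0 //; case/andP: Pl.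
  move=> ?; exfalso; lra.
have es : s = x j + \sum_(l | Po l && (l != j)) x l by rewrite /s (bigD1 j) //= /Po Pj ji.
have eQ : Q = x j ^+ 2 + \sum_(l | Po l && (l != j)) x l ^+ 2
  by rewrite /Q (bigD1 j) //= /Po Pj ji.
have hQ3 := @sumsq R I (fun l => Po l && (l != j)) x
   (fun l h => hx0 l (andP (andP h).1).1).
have r0 : 0 <= \sum_(l | Po l && (l != j)) x l.
  by apply: sumr_ge0 => l /andP[/andP[Pl _] _]; exact: hx0.
set r := \sum_(l | Po l && (l != j)) x l in es r0 hQ3.
set Q' := \sum_(l | Po l && (l != j)) x l ^+ 2 in eQ hQ3.
have hQs : s ^+ 2 <= Q by rewrite hk exi in heq; lra.
have rz : r = 0 by rewrite es eQ in hQs; nra.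
exists i, j; split => //; first by rewrite eq_sym.
by rewrite -hS eX es rz addr0.
Qed.

Lemma per_r (R : realType) (a0 ar t : R) : a0 < 0 -> a0 < ar -> 0 <= t -> t <= -a0 ->
 (if ar < -a0 then (ar + a0)^+2 else 0) - (if ar < -t then 2*ar^+2 + 2*t^+2 else 0)
  - (if -t <= ar then if ar < t then (ar - t)^+2 else 0 else 0)
 = kf (-a0 - t) (-a0 + t) (if ar < -a0 then -a0 - ar else 0).
Proof.
move=> h1 h2 h3 h4; rewrite /kf.
repeat (case: ifPn; [move=> ?| rewrite -?leNgt -?ltNge => ?]); nra.
Qed.

Definition termf (R : realType) (a : 'I_6 -> R) (zi : R) : R :=
    ( 2 * zi ^+ 2 - 2 * a ord0 ^+ 2
      + \sum_(r < 6 | (0 < r)%N && (a r < - a ord0)) (a r + a ord0) ^+ 2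
      - \sum_(r < 6 | (0 < r)%N && (a r < - `|zi|)) (2 * a r ^+ 2 + 2 * zi ^+ 2)
      - \sum_(r < 6 | (0 < r)%N && (- `|zi| <= a r) && (a r < `|zi|))
          (a r - `|zi|) ^+ 2 ).

Lemma cfunE (R : realType) (a : 'I_6 -> R) n (z : 'I_n -> R) :
  cfun a z = 1/2 * \sum_(i < n) termf a (z i).
Proof. by []. Qed.

Lemma term_eq (R : realType) (a : 'I_6 -> R) (zi : R) : a ord0 < 0 ->
  (forall r : 'I_6, (0 < r)%N -> a ord0 < a r) -> `|zi| <= - a ord0 ->
  termf a zi = \sum_(r < 6 | (0 < r)%N)
     kf (- a ord0 - `|zi|) (- a ord0 + `|zi|) (if a r < - a ord0 then - a ord0 - a r else 0)
   - 2 * (- a ord0 - `|zi|) * (- a ord0 + `|zi|).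
Proof.
move=> h0 hr ht; rewrite /termf -[zi ^+ 2](real_normK (num_real zi)) !big_mkcondr.
have -> : \sum_(r < 6 | (0 < r)%N)
     kf (- a ord0 - `|zi|) (- a ord0 + `|zi|) (if a r < - a ord0 then - a ord0 - a r else 0)
  = \sum_(r < 6 | (0 < r)%N) (if a r < - a ord0 then (a r + a ord0) ^+ 2 else 0)
  - \sum_(r < 6 | (0 < r)%N) (if a r < - `|zi| then 2 * a r ^+ 2 + 2 * `|zi| ^+ 2 else 0)
  - \sum_(r < 6 | (0 < r)%N) (if - `|zi| <= a r then (if a r < `|zi| then (a r - `|zi|) ^+ 2 else 0) else 0).
  rewrite -!sumrB; apply: eq_bigr => r hr0; rewrite per_r //; last exact: hr.
rewrite /=. ring.
Qed.

Lemma term_le (R : realType) (a : 'I_6 -> R) (zi : R) : in_PII a -> `|zi| <= - a ord0 ->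
  termf a zi <= 0 /\
  (termf a zi = 0 ->
     (exists r s : 'I_6, [/\ (0 < r)%N, (r < s)%N & a r + a s = 0]) \/ `|zi| = - a ord0).
Proof.
move=> [_ [h0 [hr [_ [hsum _]]]]] ht.
have hr' : forall r : 'I_6, (0 < r)%N -> a ord0 < a r by move=> r /hr [].
rewrite term_eq //.
set x := fun r : 'I_6 => if a r < - a ord0 then - a ord0 - a r else 0.
have t0 : 0 <= `|zi| by [].
have hx : forall r : 'I_6, (0 < r)%N -> 0 <= x r /\ x r < (- a ord0 - `|zi|) + (- a ord0 + `|zi|).
  move=> r /hr' h; rewrite /x; case: ifP => h1; split; lra.
have hS : \sum_(r < 6 | (0 < r)%N) x r = (- a ord0 - `|zi|) + (- a ord0 + `|zi|).
  rewrite /x -big_mkcondr.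
  have -> : \sum_(r < 6 | (0 < r)%N && (a r < - a ord0)) (- a ord0 - a r)
     = - \sum_(r < 6 | (0 < r)%N && (a r + a ord0 < 0)) (a r + a ord0).
    rewrite -sumrN; apply: eq_big => r.
      by congr andb; apply/idP/idP => h; lra.
    by move=> _; rewrite opprD addrC.
  rewrite -hsum; lra.
have d0 : 0 <= - a ord0 - `|zi| by lra.
have dD : - a ord0 - `|zi| <= - a ord0 + `|zi| by lra.
have [k1 k2] := key d0 dD hx hS.
split; first by lra.
move=> heq.
case: (ltrP 0 (- a ord0 - `|zi|)) => hd; last by right; lra.
left.
have [i [j [Pi Pj ij hij]]] := k2 hd ltac:(lra).
have ai : a i < - a ord0.
  have := hr' j Pj; have := hr' i Pi.
  move: hij; rewrite /x; case: ifP => // hi; case: ifP => hj; lra.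
have aj : a j < - a ord0.
  have := hr' j Pj; have := hr' i Pi.
  move: hij; rewrite /x; case: ifP => hi; case: ifP => // hj; lra.
move: hij; rewrite /x ai aj => hij.
have e : a i + a j = 0 by lra.
case: (ltngtP i j) => hl.
- by exists i, j; split.
- by exists j, i; split => //; rewrite addrC.
- by move: ij; rewrite (val_inj hl) eqxx.
Qed.

Unset Implicit Arguments.

Theorem lemmaA5 (R : realType) (a : 'I_6 -> R) (n : nat) (z : 'I_n -> R) :
  in_PII a ->
  (forall i : 'I_n, a ord0 <= z i /\ z i <= - a ord0) ->
  cfun a z <= 0 /\
  (cfun a z = 0 ->
     (exists r s : 'I_6, [/\ (0 < r)%N, (r < s)%N & a r + a s = 0])
     \/ (forall i : 'I_n, z i = a ord0 \/ z i = - a ord0)).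
Proof.
move=> hP hz.
have ht : forall i, `|z i| <= - a ord0.
  move=> i; have [h1 h2] := hz i; rewrite ler_norml; apply/andP; split; lra.
have hle : forall i, termf a (z i) <= 0 by move=> i; have [] := term_le hP (ht i).
have hs : \sum_(i < n) termf a (z i) <= 0 
  by rewrite -oppr_ge0 -sumrN; apply: sumr_ge0 => i _; rewrite oppr_ge0; exact: hle.
rewrite cfunE; split; first by lra.
move=> h0.
have hs0 : \sum_(i < n) - termf a (z i) = 0 by rewrite sumrN; lra.
have hpos : forall i : 'I_n, true -> 0 <= - termf a (z i).
  by move=> i _; rewrite oppr_ge0; exact: hle.
have hall := psumr_eq0P hpos hs0.
case: (boolP [exists i, `|z i| < - a ord0]) => [/existsP [i hi] | /existsPn hn].
  have [_ h] := term_le hP (ht i).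
  have : termf a (z i) = 0 by have := hall i isT; lra.
  move/h => [? | ?]; first by left.
  exfalso; lra.
right => i.
have e : `|z i| = - a ord0.
  by have := hn i; rewrite -leNgt => h; apply/eqP; rewrite eq_le h ht.
have [h1 h2] := hz i.
case: (lerP 0 (z i)) => hzi.
  by right; rewrite -e ger0_norm.
by left; move: e; rewrite ltr0_norm // => e; lra.
Qed.
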